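(* The intruder model $(\Sigma_{\mathrm{enc}},\vdash)$ is absorbing: for all lists $\vec x=x_1,\dots,x_n$ and $\vec y=y_1,\dots,y_n$ of pairwise distinct names, every finite set of messages $\Gamma$ with $\mathrm{names}(\Gamma)\cap\{y_1,\dots,y_n\}=\emptyset$, and $\Gamma'=\Gamma\{x_1\mapsto y_1,\dots,x_n\mapsto y_n\}$, and every message $M$ with $\mathrm{names}(M)\subseteq\mathrm{names}(\Gamma)$, we have $\Gamma\cup\Gamma'\vdash M$ if and only if $\Gamma\vdash M$.
   Context: Fix a countably infinite set of names. $\Sigma_{\mathrm{enc}}$ consists of the binary constructors $(\cdot,\cdot)$ (pairing), $\{\cdot\}_{\cdot}$ (symmetric encryption), $\mathrm{aenc}(\cdot,\cdot)$ and the unary constructor $\mathrm{pub}(\cdot)$; messages are terms over names and these constructors; $\mathrm{names}(M)$ is the set of names in $M$; substitutions are applied homomorphically. $\Gamma,M$ denotes $\Gamma\cup\{M\}$. The relation $\vdash$ is the least relation between finite sets of messages and messages closed under: (Id) if $M\in\Gamma$ then $\Gamma\vdash M$; (Pub) $\Gamma\vdash K$ implies $\Gamma\vdash\mathrm{pub}(K)$; (P$_L$) $\Gamma,(M,N),M,N\vdash M'$ implies $\Gamma,(M,N)\vdash M'$; (P$_R$) $\Gamma\vdash M$ and $\Gamma\vdash N$ imply $\Gamma\vdash(M,N)$; (S$_L$) $\Gamma,\{M\}_K\vdash K$ and $\Gamma,\{M\}_K,M,K\vdash N$ imply $\Gamma,\{M\}_K\vdash N$; (S$_R$) $\Gamma\vdash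 M$ and $\Gamma\vdash K$ imply $\Gamma\vdash\{M\}_K$; (A$_L$) $\Gamma,\mathrm{aenc}(M,\mathrm{pub}(K))\vdash K$ and $\Gamma,\mathrm{aenc}(M,\mathrm{pub}(K)),M,K\vdash N$ imply $\Gamma,\mathrm{aenc}(M,\mathrm{pub}(K))\vdash N$; (A$_R$) $\Gamma\vdash M$ and $\Gamma\vdash N$ imply $\Gamma\vdash\mathrm{aenc}(M,N)$. *)

(* Defs.v *)
From Stdlib Require Import List Arith.
Import ListNotations.

Inductive msg : Type :=
  | Name : nat -> msg
  | Pair : msg -> msg -> msg
  | Senc : msg -> msg -> msg
  | Aenc : msg -> msg -> msg
  | Pub  : msg -> msg.

Fixpoint names (M : msg) : list nat :=
  match M with
  | Name a => [a]
  | Pair M N | Senc M N | Aenc M N => names M ++ names N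
  | Pub K => names K
  end.

Definition names_set (G : list msg) : list nat := flat_map names G.

Fixpoint rename (xs ys : list nat) (a : nat) : nat :=
  match xs, ys with
  | x :: xs', y :: ys' => if Nat.eqb a x then y else rename xs' ys' a
  | _, _ => a
  end.

Fixpoint subst (s : nat -> nat) (M : msg) : msg :=
  match M with
  | Name a => Name (s a)
  | Pair M N => Pair (subst s M) (subst s N)
  | Senc M K => Senc (subst s M) (subst s K)
  | Aenc M N => Aenc (subst s M) (subst s N)
  | Pub K => Pub (subst s K)
  end.

(* A finite set of messages is represented
   by a list, read up to membership only: every rule refers to Gamma only via
   list membership ([In]) and extension by elements, so derivability depends
   only on the underlying set.  "Gamma, P |- ..." (a set containing P) is
   rendered as "In P G" for the set G. *)
Inductive derives : list msg -> msg -> Prop :=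
  | D_Id : forall G M, In M G -> derives G M
  | D_Pub : forall G K, derives G K -> derives G (Pub K)
  | D_PL : forall G M N M', In (Pair M N) G ->
      derives (M :: N :: G) M' -> derives G M'
  | D_PR : forall G M N, derives G M -> derives G N -> derives G (Pair M N)
  | D_SL : forall G M K N, In (Senc M K) G ->
      derives G K -> derives (M :: K :: G) N -> derives G N
  | D_SR : forall G M K, derives G M -> derives G K -> derives G (Senc M K)
  | D_AL : forall G M K N, In (Aenc M (Pub K)) G ->
      derives G K -> derives (M :: K :: G) N -> derives G N
  | D_AR : forall G M N, derives G M -> derives G N -> derives G (Aenc M N).

(* Main.v *)
Require Import Defs.
From Stdlib Require Import List Arith.
Import ListNotations.

Lemma weaken : forall G M, derives G M -> forall G', incl G G' -> derives G' M.
Proof.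
  induction 1; intros G' Hi.
  - apply D_Id; auto.
  - apply D_Pub; auto.
  - eapply D_PL; [apply Hi; eauto|]. apply IHderives.
    intros z [->|[->|Hz]]; simpl; auto.
  - apply D_PR; auto.
  - eapply D_SL; [apply Hi; eauto| auto |]. apply IHderives2.
    intros z [->|[->|Hz]]; simpl; auto.
  - apply D_SR; auto.
  - eapply D_AL; [apply Hi; eauto| auto |]. apply IHderives2.
    intros z [->|[->|Hz]]; simpl; auto.
  - apply D_AR; auto.
Qed.

Lemma derives_subst : forall s G M, derives G M ->
  derives (map (subst s) G) (subst s M).
Proof.
  intros s; induction 1; simpl in *.
  - apply D_Id; apply in_map; auto.
  - apply D_Pub; auto.
  - eapply D_PL; [apply (in_map (subst s)) in H; exact H|]. exact IHderives.
  - apply D_PR; auto.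
  - eapply D_SL; [apply (in_map (subst s)) in H; exact H| auto |]. exact IHderives2.
  - apply D_SR; auto.
  - eapply D_AL; [apply (in_map (subst s)) in H; exact H| auto |]. exact IHderives2.
  - apply D_AR; auto.
Qed.

Lemma subst_comp : forall f g M, subst f (subst g M) = subst (fun a => f (g a)) M.
Proof. intros f g; induction M; simpl; congruence. Qed.

Lemma subst_id : forall s M, (forall a, In a (names M) -> s a = a) -> subst s M = M.
Proof.
  intros s; induction M; simpl; intros H;
  try (rewrite IHM1, IHM2; [reflexivity| |]; intros; apply H; apply in_or_app; auto).
  - rewrite H; auto.
  - rewrite IHM; auto.
Qed.

Lemma rename_cases : forall xs ys a, In (rename xs ys a) ys \/ rename xs ys a = a.
Proof.
  induction xs; destruct ys; simpl; auto.
  intros b. destruct (Nat.eqb b a); auto.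
  destruct (IHxs ys b); auto.
Qed.

Lemma rename_inv : forall xs ys a, NoDup ys -> ~ In a ys ->
  rename ys xs (rename xs ys a) = a.
Proof.
  induction xs; destruct ys; simpl; intros b Hnd Hn; auto.
  destruct (Nat.eqb b a) eqn:E.
  - rewrite Nat.eqb_refl. apply Nat.eqb_eq in E; auto.
  - inversion Hnd; subst.
    destruct (Nat.eqb (rename xs ys b) n) eqn:E2.
    + exfalso. apply Nat.eqb_eq in E2.
      destruct (rename_cases xs ys b) as [Hi|Hi]; rewrite E2 in Hi.
      * auto.
      * apply Hn; auto.
    + apply IHxs; auto.
Qed.

Lemma rename_notin : forall xs ys a, ~ In a xs -> rename xs ys a = a.
Proof.
  induction xs; destruct ys; simpl; intros b Hn; auto.
  destruct (Nat.eqb b a) eqn:E.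
  - apply Nat.eqb_eq in E; subst; tauto.
  - auto.
Qed.

Theorem lemma3p6 :
  forall (xs ys : list nat) (G : list msg) (M : msg),
    length xs = length ys ->
    NoDup xs -> NoDup ys ->
    (forall y, In y ys -> ~ In y (names_set G)) ->
    (forall a, In a (names M) -> In a (names_set G)) ->
    (derives (G ++ map (subst (rename xs ys)) G) M <-> derives G M).
Proof.
  intros xs ys G M Hl Hx Hy HG HM. split; intro D.
  - apply (derives_subst (rename ys xs)) in D.
    rewrite map_app, map_map in D.
    assert (Hid : forall N, In N G -> subst (rename ys xs) (subst (rename xs ys) N) = N).
    { intros N HN. rewrite subst_comp. apply subst_id. intros a Ha.
      apply rename_inv; auto. intro Hay. apply (HG a Hay).
      unfold names_set. apply in_flat_map. eauto. }
    assert (HidN : forall N, (forall a, In a (names N) -> In a (names_set G)) ->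
        subst (rename ys xs) N = N).
    { intros N HN. apply subst_id. intros a Ha. apply rename_notin.
      intro Hay. apply (HG a Hay). auto. }
    rewrite (HidN M HM) in D.
    rewrite (map_ext_in _ (fun x => x) G Hid), map_id in D.
    eapply weaken; [exact D|]. intros z Hz. apply in_app_or in Hz.
    destruct Hz as [Hz|Hz]; auto.
    apply in_map_iff in Hz. destruct Hz as [N [<- HN]].
    rewrite HidN; auto. intros a Ha. unfold names_set. apply in_flat_map. eauto.
  - eapply weaken; [exact D|]. intros z Hz; apply in_or_app; auto.
Qed.
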